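(* Let $\mathcal{S}=(U,\mathcal{P})$ be a relational schema with finite domain $U$, let $D=D^n\cup D^x$ be a database instance, let $\mathcal{Q}$ be a Boolean first-order query, and let $\tau$ be an endogenous tuple. (a) If $X_\tau$ occurs positively in $\Phi_{\mathcal{Q}}(D)$, then $\mathcal{E}^D_{\tau,\mathcal{Q}}=r_{\mathcal{Q},X_\tau}\cdot\frac{\sigma_{\mathcal{Q}}}{\sigma_{X_\tau}}$. (b) If $X_\tau$ occurs negatively in $\Phi_{\mathcal{Q}}(D)$, then $\mathcal{E}^D_{\tau,\mathcal{Q}}=-\,r_{\mathcal{Q},X_\tau}\cdot\frac{\sigma_{\mathcal{Q}}}{\sigma_{X_\tau}}$. Here $\mathcal{Q}$ and $X_\tau$ are regarded as Bernoulli random variables on the space $\Omega$ of truth assignments to $\mathit{Var}(\Phi_{\mathcal{Q}}(D))$ with the uniform distribution conditioned on the exogenous variables taking their fixed values (positive exogenous variables equal to $1$, negative ones equal to $0$), $\sigma_{\mathcal{Q}},\sigma_{X_\tau}$ are their standard deviations, and $r_{\mathcal{Q},X_\tau}$ is their Pearson correlation coefficient.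
   Context: A database instance is a finite set of ground atoms (tuples) partitioned as $D=D^n\cup D^x$ into endogenous and exogenous tuples. Lineage: for every potential tuple $\tau$ introduce a propositional variable $X_\tau$; $\Phi_{\mathcal{Q}}$ is defined inductively by $\Phi_\tau:=X_\tau$, $\Phi_{a=a}:=\mathit{true}$, $\Phi_{a=b}:=\mathit{false}$ for distinct constants, $\Phi_{\mathcal{Q}_1\wedge\mathcal{Q}_2}:=\Phi_{\mathcal{Q}_1}\wedge\Phi_{\mathcal{Q}_2}$, $\Phi_{\mathcal{Q}_1\vee\mathcal{Q}_2}:=\Phi_{\mathcal{Q}_1}\vee\Phi_{\mathcal{Q}_2}$, $\Phi_{\exists x\,\mathcal{Q}}:=\bigvee_{c\in U}\Phi_{\mathcal{Q}[c/x]}$, $\Phi_{\neg\mathcal{Q}}:=\neg\Phi_{\mathcal{Q}}$. With negation only in front of variables, the $D$-lineage $\Phi_{\mathcal{Q}}(D)$ is obtained by replacing each positive occurrence of $X_\tau$ with $\tau\notin D$ by $\mathit{false}$ and each literal $\neg X_\tau$ with $\tau\in D$ by $\mathit{false}$. Standing assumptions: no variable occurs both positively and negatively in $\Phi_{\mathcal{Q}}(D)$, and every $\tau\notin D$ occurring negatively is regarded as endogenous. Exogenous variables (of tuples in $D^x$) split into positive ones $\mathit{Var}^{x,+}$ and negative ones $\mathit{Var}^{x,-}$. $\Omega$ is the set of all assignments $\sigma:\mathit{Var}(\Phi_{\mathcal{Q}}(D))\to\{0,1\}$ with uniform distribution; $\mathcal{Q}(\sigma)=1$ iff $\sigma\models\Phi_{\mathcal{Q}}(D)$,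 and $X_\tau(\sigma)=\sigma(X_\tau)$; $\mathit{do}(X=x):=\{\sigma:\sigma(X)=x\}$. For endogenous $\tau$, $E(\mathcal{Q}\mid\mathit{do}(X_\tau=v))$ is the conditional expectation of $\mathcal{Q}$ given $\mathit{do}(X_\tau=v)$ intersected with $\mathit{do}(X_{\tau'}=1)$ for all $X_{\tau'}\in\mathit{Var}^{x,+}$ and $\mathit{do}(X_{\tau'}=0)$ for all $X_{\tau'}\in\mathit{Var}^{x,-}$. The causal effect is $\mathcal{E}^D_{\tau,\mathcal{Q}}:=E(\mathcal{Q}\mid\mathit{do}(X_\tau=v))-E(\mathcal{Q}\mid\mathit{do}(X_\tau=1-v))$ with $v=1$ if $\tau\in D$ and $v=0$ otherwise. The Pearson correlation coefficient is $r_{X,Y}=\mathrm{Cov}(X,Y)/(\sigma_X\sigma_Y)$. *)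

(* Defs.v *)
From HB Require Import structures.
From mathcomp Require Import all_boot all_order all_algebra.
Set Implicit Arguments. Unset Strict Implicit. Unset Printing Implicit Defensive.
Import Order.TTheory GRing.Theory Num.Theory.

Section Lineage.
Variables (U : finType) (P : finType) (ar : P -> nat).

Definition gtuple := {p : P & {ffun 'I_(ar p) -> U}}.

Inductive term := TVar of nat | TCst of U.

Inductive fo :=
| FAtom (p : P) of ('I_(ar p) -> term)
| FEq of term & term
| FAnd of fo & fo
| FOr of fo & fo
| FNot of fo
| FEx of nat & fo.

Definition bound_in (bnd : seq nat) (t : term) : bool :=
  if t is TVar x then x \in bnd else true.

Fixpoint closed_in (bnd : seq nat) (q : fo) : bool :=
  match q with
  | FAtom p f => [forall i, bound_in bnd (f i)]
  | FEq a b => bound_in bnd a && bound_in bnd b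
  | FAnd a b | FOr a b => closed_in bnd a && closed_in bnd b
  | FNot a => closed_in bnd a
  | FEx x a => closed_in (x :: bnd) a
  end.

Definition closed_fo (q : fo) : bool := closed_in [::] q.

Inductive pform :=
| PVar of gtuple | PTrue | PFalse
| PAnd of pform & pform | POr of pform & pform | PNot of pform.

Definition tval (s : nat -> option U) (t : term) : option U :=
  match t with TVar x => s x | TCst c => Some c end.

Definition upd (s : nat -> option U) (x : nat) (c : U) : nat -> option U :=
  fun y => if y == x then Some c else s y.

(* Lineage Phi_Q; the substitution Q[c/x] is carried by s. *)
Fixpoint lin (s : nat -> option U) (q : fo) : pform :=
  match q with
  | FAtom p f =>
      match [pick g : {ffun 'I_(ar p) -> U} | [forall i, tval s (f i) == Some (g i)]] with
      | Some g => PVar (Tagged (fun p => {ffun 'I_(ar p) -> U}) g)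
      | None => PFalse
      end
  | FEq a b =>
      match tval s a, tval s b with
      | Some c, Some d => if c == d then PTrue else PFalse
      | _, _ => PFalse
      end
  | FAnd a b => PAnd (lin s a) (lin s b)
  | FOr a b => POr (lin s a) (lin s b)
  | FNot a => PNot (lin s a)
  | FEx x a => foldr (fun c acc => POr (lin (upd s x c) a) acc) PFalse (enum U)
  end.

Definition lineage (q : fo) : pform := lin (fun _ => None) q.

Inductive nform :=
| NLit of bool & gtuple   (* NLit true t = X_t, NLit false t = ~ X_t *)
| NTrue | NFalse
| NAnd of nform & nform | NOr of nform & nform.

(* Pushing negations inward (b = false means "negated"). *)
Fixpoint to_nnf (b : bool) (f : pform) : nform :=
  match f with
  | PVar t => NLit b t
  | PTrue => if b then NTrue else NFalse
  | PFalse => if b then NFalse else NTrue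
  | PAnd f1 f2 => if b then NAnd (to_nnf b f1) (to_nnf b f2)
                  else NOr (to_nnf b f1) (to_nnf b f2)
  | POr f1 f2 => if b then NOr (to_nnf b f1) (to_nnf b f2)
                 else NAnd (to_nnf b f1) (to_nnf b f2)
  | PNot f1 => to_nnf (~~ b) f1
  end.

Fixpoint dlin (D : {set gtuple}) (f : nform) : nform :=
  match f with
  | NLit true t => if t \in D then NLit true t else NFalse
  | NLit false t => if t \in D then NFalse else NLit false t
  | NTrue => NTrue
  | NFalse => NFalse
  | NAnd f1 f2 => NAnd (dlin D f1) (dlin D f2)
  | NOr f1 f2 => NOr (dlin D f1) (dlin D f2)
  end.

Definition DLineage (D : {set gtuple}) (q : fo) : nform := dlin D (to_nnf true (lineage q)).

(* occ true t f : X_t occurs positively; occ false t f : X_t occurs negatively. *)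
Fixpoint occ (b : bool) (t : gtuple) (f : nform) : bool :=
  match f with
  | NLit b' t' => (b' == b) && (t' == t)
  | NTrue | NFalse => false
  | NAnd f1 f2 | NOr f1 f2 => occ b t f1 || occ b t f2
  end.

Definition fvars (f : nform) : {set gtuple} :=
  [set t | occ true t f || occ false t f].

Fixpoint feval (sg : gtuple -> bool) (f : nform) : bool :=
  match f with
  | NLit b t => if b then sg t else ~~ sg t
  | NTrue => true
  | NFalse => false
  | NAnd f1 f2 => feval sg f1 && feval sg f2
  | NOr f1 f2 => feval sg f1 || feval sg f2
  end.

Variable R : rcfType.
Local Open Scope ring_scope.

Definition assignment := {ffun gtuple -> bool}.

(* Omega: all assignments Var(f) -> {0,1}, represented as total assignments
   that are 0 outside Var(f) (a bijective encoding). *)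
Definition Omega (f : nform) : {set assignment} :=
  [set sg : assignment | [forall t, (t \notin fvars f) ==> ~~ sg t]].

(* Conditioning on the exogenous variables taking their fixed values:
   Var^{x,+} (exogenous, occurring positively) set to 1,
   Var^{x,-} (exogenous, occurring negatively) set to 0. *)
Definition exo_ok (Dx : {set gtuple}) (f : nform) (sg : assignment) : bool :=
  [forall t, ((t \in Dx) && occ true t f) ==> sg t] &&
  [forall t, ((t \in Dx) && occ false t f) ==> ~~ sg t].

Definition Omega_x (Dx : {set gtuple}) (f : nform) : {set assignment} :=
  [set sg in Omega f | exo_ok Dx f sg].

Definition cexp (A : {set assignment}) (rv : assignment -> R) : R :=
  (\sum_(sg in A) rv sg) / #|A|%:R.

Definition variance (A : {set assignment}) (rv : assignment -> R) : R :=
  cexp A (fun sg => (rv sg - cexp A rv) ^+ 2).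

Definition covariance (A : {set assignment}) (r1 r2 : assignment -> R) : R :=
  cexp A (fun sg => (r1 sg - cexp A r1) * (r2 sg - cexp A r2)).

Definition stddev (A : {set assignment}) (rv : assignment -> R) : R :=
  Num.sqrt (variance A rv).

Definition pearson (A : {set assignment}) (r1 r2 : assignment -> R) : R :=
  covariance A r1 r2 / (stddev A r1 * stddev A r2).

Definition Qrv (f : nform) (sg : assignment) : R := (feval sg f)%:R.
Definition Xrv (t : gtuple) (sg : assignment) : R := (sg t)%:R.

(* E(Q | do(X_t = v)) : conditioned on do(X_t = v) and the exogenous values. *)
Definition do_exp (Dx : {set gtuple}) (f : nform) (t : gtuple) (v : bool) : R :=
  cexp [set sg in Omega_x Dx f | sg t == v] (Qrv f).

Definition causal_effect (Dn Dx : {set gtuple}) (q : fo) (t : gtuple) : R :=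
  let D := Dn :|: Dx in
  let f := DLineage D q in
  let v := t \in D in
  do_exp Dx f t v - do_exp Dx f t (~~ v).

End Lineage.

(* Main.v *)
Require Import Defs.
From HB Require Import structures.
From mathcomp Require Import all_boot all_order all_algebra.
From mathcomp Require Import ring lra.
Import Order.TTheory GRing.Theory Num.Theory.
Local Open Scope ring_scope.

Section Aux.
Variables (R : rcfType) (U P : finType) (ar : P -> nat).
Local Notation asg := (assignment U ar).

Variables (A : {set asg}) (tau : gtuple U ar).
Let A1 := [set sg in A | sg tau].
Let A0 := [set sg in A | ~~ sg tau].

Lemma split_sum (g : asg -> R) :
  \sum_(sg in A) g sg = \sum_(sg in A1) g sg + \sum_(sg in A0) g sg.
Proof.
rewrite (bigID (fun sg : asg => sg tau)) /=; congr (_ + _);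
  by apply: eq_bigl => sg; rewrite !inE.
Qed.

Hypothesis hcard : #|A1| = #|A0|.
Hypothesis hpos : (0 < #|A1|)%N.

Let m : R := #|A1|%:R.

Lemma m_neq0 : m != 0.
Proof. by rewrite /m pnatr_eq0 -lt0n. Qed.

Lemma cardA : #|A|%:R = 2 * m :> R.
Proof.
rewrite -(cardID (fun sg : asg => sg tau) A) natrD.
have -> : #|[predI A & (fun sg : asg => sg tau)]| = #|A1|.
  by apply: eq_card => sg; rewrite !inE.
have -> : #|[predD A & (fun sg : asg => sg tau)]| = #|A0|.
  by apply: eq_card => sg; rewrite !inE andbC.
by rewrite -hcard /m mulr2n mulrDl mul1r.
Qed.

Lemma sum1 {c : R} (g : asg -> R) : (forall sg, sg \in A1 -> g sg = c) ->
  \sum_(sg in A1) g sg = c * m.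
Proof. by move=> H; rewrite (eq_bigr (fun _ => c)) // sumr_const mulr_natr. Qed.
Lemma sum0 {c : R} (g : asg -> R) : (forall sg, sg \in A0 -> g sg = c) ->
  \sum_(sg in A0) g sg = c * m.
Proof. by move=> H; rewrite (eq_bigr (fun _ => c)) // sumr_const mulr_natr /m hcard. Qed.

Lemma inA1 sg : sg \in A1 -> Xrv R tau sg = 1.
Proof. by rewrite inE /Xrv => /andP[_ ->]. Qed.
Lemma inA0 sg : sg \in A0 -> Xrv R tau sg = 0.
Proof. by rewrite inE /Xrv => /andP[_ /negbTE ->]. Qed.

Lemma EX : cexp A (Xrv R tau) = 1/2.
Proof.
rewrite /cexp split_sum (sum1 (Xrv R tau) inA1) (sum0 (Xrv R tau) inA0) cardA.
have := m_neq0; move: m => x hx; field; by rewrite hx.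
Qed.

Lemma VX : variance A (Xrv R tau) = 1/4.
Proof.
rewrite /variance EX /cexp split_sum.
rewrite (@sum1 (1/4)) ?(@sum0 (1/4)) ?cardA.
- have := m_neq0; move: m => x hx; field; by rewrite hx.
- by move=> sg /inA0 ->; field.
- by move=> sg /inA1 ->; field.
Qed.

Lemma COV (Q : asg -> R) : covariance A Q (Xrv R tau) =
  (cexp A1 Q - cexp A0 Q) / 4.
Proof.
rewrite /covariance EX /cexp.
set e := (\sum_(sg in A) Q sg) / #|A|%:R.
rewrite split_sum.
rewrite (eq_bigr (fun sg => (Q sg - e) * (1/2))); last by move=> sg /inA1 ->; field.
rewrite [X in _ + X](eq_bigr (fun sg => (Q sg - e) * (-1/2))); last by move=> sg /inA0 ->; field.
rewrite -!mulr_suml !sumrB (@sum1 e (fun _ => e)) // (@sum0 e (fun _ => e)) // /e split_sum cardA.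
rewrite -hcard -/m.
have := m_neq0; move: m => x hx; field; by rewrite hx.
Qed.

Lemma const_case (Q : asg -> R) : stddev A Q = 0 -> cexp A1 Q = cexp A0 Q.
Proof.
move=> /eqP; rewrite sqrtr_eq0 => hle.
have cA : #|A|%:R != 0 :> R by rewrite cardA mulf_neq0 ?m_neq0 ?pnatr_eq0.
have hge : 0 <= variance A Q.
  by rewrite /variance /cexp divr_ge0 ?ler0n // sumr_ge0 // => sg _; exact: sqr_ge0.
have h0 : variance A Q = 0 by apply/eqP; rewrite eq_le hle hge.
move: h0; rewrite /variance /cexp => /eqP; rewrite mulf_eq0 invr_eq0 (negbTE cA) orbF.
move=> /eqP /psumr_eq0P => H.
have H' : forall sg, sg \in A -> Q sg = cexp A Q.
  move=> sg sgA; apply/eqP; rewrite -subr_eq0 -sqrf_eq0; apply/eqP.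
  by apply: H => // x _; exact: sqr_ge0.
rewrite /cexp -/A1 -/A0 -hcard -/m (sum1 Q (c:=cexp A Q)); last first.
  by move=> sg; rewrite inE => /andP[sA _]; exact: H'.
rewrite (sum0 Q (c:=cexp A Q)) //.
by move=> sg; rewrite inE => /andP[sA _]; exact: H'.
Qed.

Lemma main_eq (Q : asg -> R) :
  pearson A Q (Xrv R tau) * (stddev A Q / stddev A (Xrv R tau)) =
  cexp A1 Q - cexp A0 Q.
Proof.
have sX2 : stddev A (Xrv R tau) ^+ 2 = 1/4.
  by rewrite /stddev sqr_sqrtr VX // divr_ge0 ?ler0n.
have sX0 : stddev A (Xrv R tau) != 0.
  by apply/eqP => h; move: sX2; rewrite h expr0n /= => /eqP; rewrite eq_sym mulf_eq0 invr_eq0 oner_eq0 pnatr_eq0.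
have [sQ0|sQ0] := eqVneq (stddev A Q) 0.
  by rewrite sQ0 mul0r mulr0 (@const_case Q sQ0) subrr.
rewrite /pearson COV.
move: sX2 sX0 sQ0; move: (stddev A (Xrv R tau)) (stddev A Q) => x y hx2 hx hy.
move: (cexp A1 Q - cexp A0 Q) => d.
have h4 : 4 * x ^+ 2 = 1 by rewrite hx2; field.
transitivity (d / (4 * x ^+ 2)); last by rewrite h4 invr1 mulr1.
field; by rewrite hx hy.
Qed.
End Aux.
Section Struct.
Variables (U P : finType) (ar : P -> nat).
Local Notation asg := (assignment U ar).
Variables (Dx : {set gtuple U ar}) (f : nform U ar) (tau : gtuple U ar).
Hypothesis hstand : forall t, ~~ (occ true t f && occ false t f).
Hypothesis htau : tau \in fvars f.
Hypothesis hnx : tau \notin Dx.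
Let A := Omega_x Dx f.

Definition flip (sg : asg) : asg := [ffun t => if t == tau then ~~ sg t else sg t].

Lemma flipK : involutive flip.
Proof.
move=> sg; apply/ffunP => t; rewrite !ffunE.
by case: eqP => // _; rewrite negbK.
Qed.

Lemma flipA sg : (flip sg \in A) = (sg \in A).
Proof.
rewrite /A /Omega_x /Omega /exo_ok !inE.
congr (_ && (_ && _)); apply: eq_forallb => t; rewrite ffunE;
  case: eqP => // ->.
- by rewrite htau.
- by rewrite (negbTE hnx).
- by rewrite (negbTE hnx).
Qed.

Lemma card_halves : #|[set sg in A | sg tau]| = #|[set sg in A | ~~ sg tau]|.
Proof.
have -> : [set sg in A | ~~ sg tau] = flip @: [set sg in A | sg tau].
  apply/setP => sg; rewrite inE; apply/idP/imsetP.
  - move=> /andP[sA st]; exists (flip sg); last by rewrite flipK.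
    by rewrite inE flipA sA /flip ffunE eqxx.
  - move=> [sg' ]; rewrite inE => /andP[sA st] ->.
    by rewrite flipA sA /flip ffunE eqxx st.
by rewrite card_imset //; exact: (can_inj flipK).
Qed.

Lemma pos_half : (0 < #|[set sg in A | sg tau]|)%N.
Proof.
apply/card_gt0P.
exists [ffun t => (t == tau) || ((t \in Dx) && occ true t f)].
rewrite inE /A /Omega_x /Omega /exo_ok !inE ffunE eqxx andbT.
apply/and3P; split.
- apply/forallP => t; rewrite ffunE; apply/implyP => ht.
  apply/negP => /orP[/eqP Et|/andP[_ ho]].
    by move: ht; rewrite Et htau.
  by move: ht; rewrite inE ho.
- by apply/forallP => t; rewrite ffunE; apply/implyP => ->; rewrite orbT.
- apply/forallP => t; rewrite ffunE; apply/implyP => /andP[tD ho].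
  have : t != tau by apply: contraNneq hnx => <-.
  move=> /negbTE ->; rewrite tD /=.
  by apply/negP => ho'; move: (hstand t); rewrite ho ho'.
Qed.
End Struct.

Lemma occ_lit (U P : finType) (ar : P -> nat) b b' (t t' : gtuple U ar) :
  occ b t (NLit b' t') = (b' == b) && (t' == t).
Proof. by []. Qed.

Lemma occ_dlin_pos (U P : finType) (ar : P -> nat) (D : {set gtuple U ar}) g t :
  occ true t (dlin D g) -> t \in D.
Proof.
elim: g.
- move=> b t'; case: b; rewrite [dlin _ _]/=; case: ifP => H; try (move=> /=; done); rewrite occ_lit => /andP[_ /eqP E]; by rewrite -E.
- by [].
- by [].
- by move=> a iha b ihb /orP[/iha|/ihb].
- by move=> a iha b ihb /orP[/iha|/ihb].
Qed.

Lemma occ_dlin_neg (U P : finType) (ar : P -> nat) (D : {set gtuple U ar}) g t :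
  occ false t (dlin D g) -> t \notin D.
Proof.
elim: g.
- move=> b t'; case: b; rewrite [dlin _ _]/=; case: ifP => H; try (move=> /=; done); rewrite occ_lit => /andP[_ /eqP E]; by rewrite -E H.
- by [].
- by [].
- by move=> a iha b ihb /orP[/iha|/ihb].
- by move=> a iha b ihb /orP[/iha|/ihb].
Qed.

Theorem proposition3 (R : rcfType) (U P : finType) (ar : P -> nat)
    (Dn Dx : {set gtuple U ar}) (q : fo U ar) (tau : gtuple U ar) :
  [disjoint Dn & Dx] ->
  closed_fo q ->
  (* standing assumption: no variable occurs both positively and negatively *)
  (forall t, ~~ (occ true t (DLineage (Dn :|: Dx) q) &&
                 occ false t (DLineage (Dn :|: Dx) q))) ->
  (* tau is endogenous: in D^n, or not in D (then regarded as endogenous) *)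
  (tau \in Dn) || (tau \notin Dn :|: Dx) ->
  let f := DLineage (Dn :|: Dx) q in
  let A := Omega_x Dx f in
  let r := pearson A (Qrv R f) (Xrv R tau) in
  let sQ := stddev A (Qrv R f) in
  let sX := stddev A (Xrv R tau) in
  (occ true tau f -> causal_effect R Dn Dx q tau = r * (sQ / sX)) /\
  (occ false tau f -> causal_effect R Dn Dx q tau = - (r * (sQ / sX))).
Proof.
move=> hdisj _ hst hend f A r sQ sX.
have key : tau \in fvars f -> tau \notin Dx ->
    r * (sQ / sX) = do_exp R Dx f tau true - do_exp R Dx f tau false.
  move=> hf hx.
  have hc := @card_halves U P ar Dx f tau hf hx.
  have hp := @pos_half U P ar Dx f tau hst hf hx.
  rewrite /r /sQ /sX main_eq //.
  rewrite /do_exp -/A.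
  have -> : [set sg in A | sg tau == true] = [set sg in A | sg tau].
    by apply/setP => sg; rewrite !inE eqb_id.
  have -> : [set sg in A | sg tau == false] = [set sg in A | ~~ sg tau].
    by apply/setP => sg; rewrite !inE eqbF_neg.
  by [].
have hfv : forall b, occ b tau f -> tau \in fvars f.
  by case=> h; rewrite inE h ?orbT.
split.
- move=> ho.
  have hD : tau \in Dn :|: Dx by exact: (@occ_dlin_pos U P ar (Dn :|: Dx) _ tau ho).
  have hn : tau \in Dn by move: hend; rewrite hD orbF.
  have hx : tau \notin Dx by apply/negP => hx; move: (hdisj); rewrite disjoint_subset => /subsetP /(_ _ hn); rewrite inE hx.
  rewrite key ?(hfv true) // /causal_effect /= hD.
  by [].
- move=> ho.
  have hD : tau \notin Dn :|: Dx by exact: (@occ_dlin_neg U P ar (Dn :|: Dx) _ tau ho).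
  have hx : tau \notin Dx by apply: contra hD; rewrite inE => ->; rewrite orbT.
  rewrite key ?(hfv false) // /causal_effect /= (negbTE hD) /= opprB.
  by [].
Qed.
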